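(* Let $v>0$, $q>0$ and let $\kappa\ge -q/4$ be real; put $s=\frac12+\sqrt{\frac{\kappa}{q}+\frac14}$. For each integer $n\ge0$ with $n+s<\sqrt{v/q}$, the function $$\psi_n(r)=e^{-\left(\frac{v}{2q(n+s)}-\frac{n+s}{2}\right)r}\left(1-q\,e^{-r}\right)^{s}\;{}_2F_1\!\left(-n,\,s+\frac{v}{q(n+s)};\,1-n-s+\frac{v}{q(n+s)};\,q\,e^{-r}\right)$$ satisfies, on $r\in(\log q,\infty)$, $$-\psi_n''(r)+\left(\frac{\kappa\,e^{-r}}{(1-q\,e^{-r})^2}-\frac{v\,e^{-r}}{1-q\,e^{-r}}\right)\psi_n(r)=\mathfrak E_n\,\psi_n(r),\qquad \mathfrak E_n=-\left(\frac{v}{2q(n+s)}-\frac{n+s}{2}\right)^2,$$ together with $\psi_n(\log q)=\psi_n(\infty)=0$. In particular, for $\kappa=q\,j(j+1)$ with $j\in\{0,1,2,\dots\}$ one has $s=j+1$ and $\mathfrak E_n=-\left(\frac{v}{2q(n+j+1)}-\frac{n+j+1}{2}\right)^2$.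
   Context: ${}_2F_1(\alpha,\beta;\gamma;z)=\sum_{k\ge0}\frac{(\alpha)_k(\beta)_k}{(\gamma)_k k!}z^k$ is the Gauss hypergeometric function, with $(a)_k$ the Pochhammer symbol; for $\alpha=-n$ it is a polynomial in $z$. *)

(* Defs.v *)
From Stdlib Require Import Reals Factorial.
From Coquelicot Require Import Coquelicot.
Open Scope R_scope.

Fixpoint poch (a : R) (k : nat) : R :=
  match k with
  | O => 1
  | S k' => poch a k' * (a + INR k')
  end.

(* Gauss hypergeometric function 2F1(-n, b; c; z), which for alpha = -n is a
   polynomial: the series terminates, all terms with k > n vanish. *)
Definition hyp2F1_neg (n : nat) (b c z : R) : R :=
  sum_f_R0 (fun k => poch (- INR n) k * poch b k / (poch c k * INR (fact k)) * z ^ k) n.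

(* Real power x^y for x >= 0, with the convention 0^y = 0 (used for y > 0). *)
Definition rpow (x y : R) : R := if Rle_dec x 0 then 0 else Rpower x y.

Definition s_par (q kappa : R) : R := / 2 + sqrt (kappa / q + / 4).

Definition alpha_n (v q kappa : R) (n : nat) : R :=
  v / (2 * q * (INR n + s_par q kappa)) - (INR n + s_par q kappa) / 2.

Definition psi_n (v q kappa : R) (n : nat) (r : R) : R :=
  let s := s_par q kappa in
  exp (- alpha_n v q kappa n * r) * rpow (1 - q * exp (- r)) s *
  hyp2F1_neg n (s + v / (q * (INR n + s)))
                (1 - INR n - s + v / (q * (INR n + s))) (q * exp (- r)).

Definition E_n (v q kappa : R) (n : nat) : R := - (alpha_n v q kappa n) ^ 2.

Definition potential (v q kappa r : R) : R :=
  kappa * exp (- r) / (1 - q * exp (- r)) ^ 2 - v * exp (- r) / (1 - q * exp (- r)).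

(* Main.v *)
Require Import Defs.
From Stdlib Require Import Reals Lra Lia Factorial.
From Coquelicot Require Import Coquelicot.
Open Scope R_scope.

Lemma poch_pos c k : 0 < c -> 0 < poch c k.
Proof.
  intros Hc; induction k; simpl. lra.
  apply Rmult_lt_0_compat; auto. pose proof (pos_INR k); lra.
Qed.

Definition coef (n : nat) (b c : R) (k : nat) : R :=
  poch (- INR n) k * poch b k / (poch c k * INR (fact k)).

Lemma coef_rec n b c k : 0 < c ->
  coef n b c (S k) * (INR (S k) * (c + INR k)) =
  coef n b c k * ((- INR n + INR k) * (b + INR k)).
Proof.
  intros Hc. unfold coef. simpl poch. change (fact (S k)) with (S k * fact k)%nat.
  rewrite mult_INR.
  pose proof (poch_pos c k Hc). pose proof (INR_fact_neq_0 k).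
  pose proof (pos_INR k). rewrite S_INR.
  field. repeat split; lra.
Qed.

Lemma telescope (a A B : nat -> R) z :
  A 0%nat = 0 ->
  (forall k, a (S k) * A (S k) = - (a k * B k)) ->
  forall m, sum_f_R0 (fun k => a k * z ^ k * (A k + B k * z)) m = a m * B m * z ^ (S m).
Proof.
  intros H0 Hr m; induction m; simpl.
  - rewrite H0; ring.
  - rewrite IHm. simpl. 
    replace (a (S m) * (z * z ^ m) * (A (S m) + B (S m) * z))
      with (a (S m) * A (S m) * (z * z ^ m) + a (S m) * B (S m) * (z * z ^ m) * z) by ring.
    rewrite Hr. ring.
Qed.

Definition uu q r := 1 - q * exp (- r).
Definition hh q s be r := - be * r + s * ln (uu q r).
Definition h1 q s be r := - be + s * (q * exp (- r)) / uu q r.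
Definition h2 q s r := - s * (q * exp (- r)) / (uu q r) ^ 2.

Lemma d1 q s be r : 0 < uu q r ->
  is_derive (fun r => exp (hh q s be r)) r (exp (hh q s be r) * h1 q s be r).
Proof.
  intros Hu. unfold hh, h1. unfold uu in *. auto_derive.
  - lra.
  - unfold Rminus. field. lra.
Qed.

Lemma d2 q s be r : 0 < uu q r ->
  is_derive (fun r => exp (hh q s be r) * h1 q s be r) r
    (exp (hh q s be r) * (h1 q s be r ^ 2 + h2 q s r)).
Proof.
  intros Hu. unfold hh, h1, h2. unfold uu in *. auto_derive.
  - repeat split; lra.
  - unfold Rminus. field. lra.
Qed.

Lemma d_sum (f df : nat -> R -> R) r n :
  (forall k, is_derive (f k) r (df k r)) ->
  is_derive (fun x => sum_f_R0 (fun k => f k x) n) r (sum_f_R0 (fun k => df k r) n).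
Proof.
  intros H; induction n; simpl.
  - apply H.
  - apply (is_derive_plus (fun x => sum_f_R0 (fun k => f k x) n) (f (S n))); auto.
Qed.

Lemma exp_pow_neg r k : exp (- r) ^ k = exp (- (INR k) * r).
Proof.
  induction k; simpl. replace (-0*r) with 0 by ring. now rewrite exp_0.
  rewrite IHk, <- exp_plus. f_equal. destruct k; simpl; ring.
Qed.

Lemma Lk q s al k r :
  q ^ k * exp (hh q s (al + INR k) r) = exp (hh q s al r) * (q * exp (- r)) ^ k.
Proof.
  rewrite Rpow_mult_distr, exp_pow_neg.
  replace (hh q s (al + INR k) r) with (hh q s al r + - INR k * r)
    by (unfold hh; ring).
  rewrite exp_plus. ring.
Qed.

Lemma bracket (q s al k v e : R) : q <> 0 -> 1 - q * e <> 0 ->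
  -((-(al+k) + s*(q*e)/(1 - q*e))^2 + (-s*(q*e)/(1-q*e)^2))
   + (q*s*(s-1)*e/(1-q*e)^2 - v*e/(1-q*e)) + al^2
  = ( -k*(2*al+k) + (k*(2*al+k) + 2*(al+k)*s - v/q + s^2) * (q*e))/(1-q*e).
Proof. intros. field. tauto. Qed.

Lemma sum_comb (f g : nat -> R) X n :
  - sum_f_R0 f n + X * sum_f_R0 g n = sum_f_R0 (fun k => - f k + X * g k) n.
Proof. induction n; simpl. ring. rewrite <- IHn. ring. Qed.

Lemma u_pos q r : 0 < q -> ln q < r -> 0 < uu q r.
Proof.
  intros Hq Hr. unfold uu.
  assert (exp (- r) < / q).
  { rewrite <- (exp_ln q) by lra. rewrite <- exp_Ropp. apply exp_increasing. lra. }
  assert (q * exp (- r) < q * / q) by (apply Rmult_lt_compat_l; lra).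
  rewrite Rinv_r in H0; lra.
Qed.

Definition Gf q s al (a : nat -> R) n r :=
  sum_f_R0 (fun k => a k * q ^ k * exp (hh q s (al + INR k) r)) n.
Definition G1f q s al (a : nat -> R) n r :=
  sum_f_R0 (fun k => a k * q ^ k * (exp (hh q s (al + INR k) r) * h1 q s (al + INR k) r)) n.
Definition G2f q s al (a : nat -> R) n r :=
  sum_f_R0 (fun k => a k * q ^ k * (exp (hh q s (al + INR k) r) *
     (h1 q s (al + INR k) r ^ 2 + h2 q s r))) n.

Lemma G_der q s al a n r : 0 < uu q r -> is_derive (Gf q s al a n) r (G1f q s al a n r).
Proof.
  intros Hu. unfold Gf, G1f.
  apply (d_sum (fun k r => a k * q ^ k * exp (hh q s (al + INR k) r))
    (fun k r => a k * q ^ k * (exp (hh q s (al + INR k) r) * h1 q s (al + INR k) r))).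
  intro k. apply (is_derive_scal (fun r => exp (hh q s (al + INR k) r))). now apply d1.
Qed.

Lemma G1_der q s al a n r : 0 < uu q r -> is_derive (G1f q s al a n) r (G2f q s al a n r).
Proof.
  intros Hu. unfold G1f, G2f.
  apply (d_sum (fun k r => a k * q ^ k * (exp (hh q s (al + INR k) r) * h1 q s (al + INR k) r))
    (fun k r => a k * q ^ k * (exp (hh q s (al + INR k) r) *
     (h1 q s (al + INR k) r ^ 2 + h2 q s r)))).
  intro k. apply (is_derive_scal (fun r => exp (hh q s (al + INR k) r) * h1 q s (al + INR k) r)).
  now apply d2.
Qed.

Definition Bk q s al v k := INR k * (2 * al + INR k) + 2 * (al + INR k) * s - v / q + s ^ 2.

Lemma G_ode q s al a n v r : 0 < q -> 0 < uu q r ->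
  (forall k, a (S k) * (- INR (S k) * (2 * al + INR (S k))) = - (a k * Bk q s al v k)) ->
  Bk q s al v n = 0 ->
  - G2f q s al a n r
  + (q * s * (s - 1) * exp (- r) / (1 - q * exp (- r)) ^ 2 - v * exp (- r) / (1 - q * exp (- r)))
    * Gf q s al a n r
  = - al ^ 2 * Gf q s al a n r.
Proof.
  intros Hq Hu Hrec HBn.
  set (Pt := (q * s * (s - 1) * exp (- r) / (1 - q * exp (- r)) ^ 2 - v * exp (- r) / (1 - q * exp (- r)))).
  cut (- G2f q s al a n r + (Pt + al ^ 2) * Gf q s al a n r = 0).
  { intros H. lra. }
  unfold G2f, Gf. rewrite sum_comb.
  set (E0 := exp (hh q s al r)).
  rewrite (sum_eq _ (fun k => (a k * (q * exp (- r)) ^ k *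
       (- INR k * (2 * al + INR k) + Bk q s al v k * (q * exp (- r)))) * (E0 / uu q r))).
  - rewrite <- scal_sum.
    rewrite (telescope a (fun k => - INR k * (2 * al + INR k)) (Bk q s al v)).
    + rewrite HBn. ring.
    + simpl. ring.
    + intro k. apply Hrec.
  - intros k _.
    pose proof (Lk q s al k r) as HL.
    set (E := exp (hh q s (al + INR k) r)) in *.
    transitivity (a k * (q ^ k * E) * (- (h1 q s (al + INR k) r ^ 2 + h2 q s r) + Pt + al ^ 2)).
    { ring. }
    rewrite HL. fold E0. unfold h1, h2, Pt, Bk. unfold uu in *.
    set (e := exp (- r)) in *. set (zk := (q * e) ^ k).
    field. split; lra.
Qed.

Lemma s_facts q kappa : 0 < q -> - q / 4 <= kappa ->
  / 2 <= s_par q kappa /\ kappa = q * s_par q kappa * (s_par q kappa - 1).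
Proof.
  intros Hq Hk. unfold s_par.
  assert (H0 : 0 <= kappa / q + / 4).
  { replace (kappa / q + / 4) with ((kappa + q / 4) * / q) by (field; lra).
    apply Rmult_le_pos; [lra|]. left; apply Rinv_0_lt_compat; lra. }
  pose proof (sqrt_pos (kappa / q + / 4)). pose proof (sqrt_sqrt _ H0).
  split. lra.
  replace (q * (/ 2 + sqrt (kappa / q + / 4)) * (/ 2 + sqrt (kappa / q + / 4) - 1))
    with (q * (sqrt (kappa / q + / 4) * sqrt (kappa / q + / 4) - / 4)) by field.
  rewrite H1. field. lra.
Qed.

Lemma psi_eq v q kappa n r : 0 < q -> ln q < r ->
  psi_n v q kappa n r =
  Gf q (s_par q kappa) (alpha_n v q kappa n)
    (coef n (s_par q kappa + v / (q * (INR n + s_par q kappa)))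
            (1 - INR n - s_par q kappa + v / (q * (INR n + s_par q kappa)))) n r.
Proof.
  intros Hq Hr. pose proof (u_pos q r Hq Hr) as Hu. unfold uu in Hu.
  unfold psi_n, rpow, Gf. cbv zeta.
  destruct (Rle_dec (1 - q * exp (- r)) 0) as [Hle|_]; [lra|].
  unfold hyp2F1_neg. rewrite scal_sum. apply sum_eq. intros k _.
  rewrite (Rmult_assoc (coef _ _ _ k) (q ^ k)), Lk. unfold hh, uu, Rpower, coef. rewrite exp_plus.
  ring.
Qed.
Lemma lim_exp_neg al : 0 < al -> is_lim (fun r => exp (- al * r)) p_infty 0.
Proof.
  intros Hal.
  apply (is_lim_comp exp (fun r => - al * r) p_infty 0 m_infty).
  - apply is_lim_exp_m.
  - assert (E : Rbar_mult (- al) p_infty = m_infty).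
    { unfold Rbar_mult, Rbar_mult'. destruct (Rle_dec 0 (-al)) as [h|h]. exfalso; lra. reflexivity. }
    rewrite <- E. apply (is_lim_scal_l (fun y => y) (- al) p_infty p_infty (is_lim_id _)).
  - exists 0. intros; discriminate.
Qed.

Lemma exp_le1 x : x <= 0 -> exp x <= 1.
Proof.
  intros H. rewrite <- exp_0. destruct (Rle_lt_or_eq_dec _ _ H) as [h|h].
  left; now apply exp_increasing. rewrite h; lra.
Qed.

Lemma main_n v q kappa n : 0 < v -> 0 < q -> - q / 4 <= kappa ->
  INR n + s_par q kappa < sqrt (v / q) ->
     (forall r, ln q < r -> ex_derive (psi_n v q kappa n) r) /\
     (forall r, ln q < r ->
        ex_derive (Derive (psi_n v q kappa n)) r /\
        - Derive_n (psi_n v q kappa n) 2 r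
          + potential v q kappa r * psi_n v q kappa n r
        = E_n v q kappa n * psi_n v q kappa n r) /\
     psi_n v q kappa n (ln q) = 0 /\
     is_lim (psi_n v q kappa n) p_infty 0.
Proof.
  intros Hv Hq Hk Hn.
  destruct (s_facts q kappa Hq Hk) as [Hs Hks].
  set (s := s_par q kappa) in *.
  pose proof (pos_INR n) as Hn0.
  assert (Hm : 0 < INR n + s) by lra.
  assert (Hvq : 0 <= v / q) by (left; apply Rdiv_lt_0_compat; lra).
  pose proof (sqrt_sqrt _ Hvq) as Hsq.
  assert (Hmm : (INR n + s) * (INR n + s) < v / q).
  { pose proof (sqrt_pos (v / q)). nra. }
  set (al := alpha_n v q kappa n).
  assert (Hal : al = v / (2 * q * (INR n + s)) - (INR n + s) / 2) by reflexivity.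
  assert (Halp : 0 < al).
  { rewrite Hal. replace (v / (2 * q * (INR n + s)) - (INR n + s) / 2)
      with ((v / q - (INR n + s) * (INR n + s)) / (2 * (INR n + s))) by (field; lra).
    apply Rdiv_lt_0_compat; lra. }
  set (b := s + v / (q * (INR n + s))).
  set (c := 1 - INR n - s + v / (q * (INR n + s))).
  assert (Hc : c = 1 + 2 * al) by (unfold c; rewrite Hal; field; lra).
  assert (Hcp : 0 < c) by lra.
  assert (HB : forall k, Bk q s al v k = (- INR n + INR k) * (b + INR k)).
  { intro k. unfold Bk, b. rewrite Hal. field. lra. }
  assert (Hrec : forall k, coef n b c (S k) * (- INR (S k) * (2 * al + INR (S k)))
                 = - (coef n b c k * Bk q s al v k)).
  { intro k. assert (E1 : 2 * al + INR (S k) = c + INR k) by (rewrite S_INR, Hc; ring).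
    rewrite E1, HB, <- (coef_rec n b c k Hcp). ring. }
  assert (HBn : Bk q s al v n = 0) by (rewrite HB; ring).
  assert (HG : forall r, ln q < r -> psi_n v q kappa n r = Gf q s al (coef n b c) n r).
  { intros r Hr. apply psi_eq; auto. }
  assert (Hloc : forall r, ln q < r -> locally r (fun t => ln q < t)).
  { intros r Hr. apply (open_gt (ln q)). exact Hr. }
  assert (Hd1 : forall r, ln q < r -> is_derive (psi_n v q kappa n) r (G1f q s al (coef n b c) n r)).
  { intros r Hr. apply (is_derive_ext_loc (Gf q s al (coef n b c) n)).
    - apply (filter_imp (fun t => ln q < t)); [|apply Hloc; exact Hr].
      intros t Ht. symmetry. apply HG, Ht.
    - apply G_der, u_pos; auto. }
  assert (Hd2 : forall r, ln q < r -> is_derive (Derive (psi_n v q kappa n)) r (G2f q s al (coef n b c) n r)).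
  { intros r Hr. apply (is_derive_ext_loc (G1f q s al (coef n b c) n)).
    - apply (filter_imp (fun t => ln q < t)); [|apply Hloc; exact Hr].
      intros t Ht. symmetry. apply is_derive_unique, Hd1, Ht.
    - apply G1_der, u_pos; auto. }
  split; [|split; [|split]].
  - intros r Hr. eexists. apply Hd1, Hr.
  - intros r Hr. split. { eexists. apply Hd2, Hr. }
    change (Derive_n (psi_n v q kappa n) 2 r) with (Derive (Derive (psi_n v q kappa n)) r).
    rewrite (is_derive_unique _ _ _ (Hd2 r Hr)), (HG r Hr).
    unfold potential, E_n. fold al. rewrite Hks.
    apply G_ode; auto. apply u_pos; auto.
  - unfold psi_n, rpow. cbv zeta.
    rewrite exp_Ropp, exp_ln by lra.
    replace (1 - q * / q) with 0 by (field; lra).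
    destruct (Rle_dec 0 0) as [h|h]; [ring | lra].
  - set (M := sum_f_R0 (fun k => Rabs (coef n b c k)) n).
    apply (is_lim_le_le_loc (fun r => - (M * exp (- al * r))) (fun r => M * exp (- al * r))).
    + exists (ln q). intros r Hr. apply Rabs_le_between.
      pose proof (u_pos q r Hq Hr) as Hu. unfold uu in Hu.
      assert (Hz : 0 < q * exp (- r)) by (apply Rmult_lt_0_compat; [lra| apply exp_pos]).
      unfold psi_n, rpow. cbv zeta. fold s. fold al. fold b. fold c.
      destruct (Rle_dec (1 - q * exp (- r)) 0) as [h|_]; [lra|].
      unfold Rpower.
      assert (Hp : exp (s * ln (1 - q * exp (- r))) <= 1).
      { apply exp_le1. assert (ln (1 - q * exp (- r)) <= 0).
        { rewrite <- ln_1. apply ln_le; lra. } nra. }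
      assert (HF : Rabs (hyp2F1_neg n b c (q * exp (- r))) <= M).
      { unfold hyp2F1_neg, M. eapply Rle_trans; [apply Rsum_abs|]. apply sum_Rle.
        intros k _. fold (coef n b c k). rewrite Rabs_mult, <- RPow_abs.
        rewrite (Rabs_pos_eq (q * exp (- r))) by lra.
        assert (0 <= (q * exp (- r)) ^ k <= 1).
        { split. apply pow_le; lra. rewrite <- (pow1 k). apply pow_incr; lra. }
        pose proof (Rabs_pos (coef n b c k)). nra. }
      rewrite !Rabs_mult, (Rabs_pos_eq (exp _)) by (left; apply exp_pos).
      rewrite (Rabs_pos_eq (exp (s * _))) by (left; apply exp_pos).
      pose proof (exp_pos (- al * r)). pose proof (exp_pos (s * ln (1 - q * exp (- r)))).
      pose proof (Rabs_pos (hyp2F1_neg n b c (q * exp (- r)))).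
      replace (exp (- (al * r))) with (exp (- al * r)) by (f_equal; ring).
      set (E := exp (- al * r)) in *. set (P := exp (s * ln (1 - q * exp (- r)))) in *.
      set (F := Rabs (hyp2F1_neg n b c (q * exp (- r)))) in *.
      assert (P * F <= M) by nra.
      rewrite Rmult_assoc, (Rmult_comm M). apply Rmult_le_compat_l; lra.
    + replace (Finite 0) with (Rbar_opp (Rbar_mult M 0)) by (simpl; f_equal; ring).
      apply is_lim_opp, is_lim_scal_l, lim_exp_neg, Halp.
    + replace (Finite 0) with (Rbar_mult M 0) by (simpl; f_equal; ring).
      apply is_lim_scal_l, lim_exp_neg, Halp.
Qed.

Theorem mainTheorem4 (v q kappa : R) :
  0 < v -> 0 < q -> - q / 4 <= kappa ->
  (forall n : nat, INR n + s_par q kappa < sqrt (v / q) ->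
     (forall r, ln q < r -> ex_derive (psi_n v q kappa n) r) /\
     (forall r, ln q < r ->
        ex_derive (Derive (psi_n v q kappa n)) r /\
        - Derive_n (psi_n v q kappa n) 2 r
          + potential v q kappa r * psi_n v q kappa n r
        = E_n v q kappa n * psi_n v q kappa n r) /\
     psi_n v q kappa n (ln q) = 0 /\
     is_lim (psi_n v q kappa n) p_infty 0) /\
  (forall j : nat, kappa = q * INR j * (INR j + 1) ->
     s_par q kappa = INR j + 1 /\
     forall n : nat,
       E_n v q kappa n
       = - (v / (2 * q * (INR n + INR j + 1)) - (INR n + INR j + 1) / 2) ^ 2).
Proof.
  intros Hv Hq Hk. split.
  - intros n Hn. apply main_n; auto.
  - intros j Hj.
    assert (Hs : s_par q kappa = INR j + 1).
    { unfold s_par. pose proof (pos_INR j).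
      replace (kappa / q + / 4) with ((INR j + / 2) * (INR j + / 2)) by (rewrite Hj; field; lra).
      rewrite sqrt_square by lra. lra. }
    split; [exact Hs|].
    intro n. unfold E_n, alpha_n. rewrite Hs.
    replace (INR n + (INR j + 1)) with (INR n + INR j + 1) by ring. reflexivity.
Qed.
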